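(* Let $D\subset\mathbb{R}^2$ be a simply connected domain, let $\mu\neq\theta$ be real constants, and let $v=(v^1,v^2),\,w=(w^1,w^2)\colon D\to\mathbb{R}^2$ be smooth maps satisfying on $D$ the system $$\begin{cases} w^1_{10}v^2_{01}-w^1_{01}v^2_{10}-w^2_{10}v^1_{01}+w^2_{01}v^1_{10}=0,\\ w^2_{10}v^2_{01}-w^2_{01}v^2_{10}+w^1_{10}v^1_{01}-w^1_{01}v^1_{10}=0,\end{cases}$$ and $\det(dv)+\det(dw)\neq 0$ on $D$. Let $$\varphi(t,\alpha)=M_1(t)v(\alpha)+M_2(t)w(\alpha),\quad M_1(t)=\begin{pmatrix}\cos\mu t&-\sin\mu t\\ \sin\mu t&\cos\mu t\end{pmatrix},\ M_2(t)=\begin{pmatrix}\cos\theta t&-\sin\theta t\\ \sin\theta t&\cos\theta t\end{pmatrix}.$$ Then $\det(d\varphi^t)=\det(dv)+\det(dw)$ for all $t$ (in particular it is independent of $t$ and nonzero), and there exists a scalar function $p(t,\alpha)$ with $(d\varphi^t)^T\varphi''+\nabla_\alpha p=0$ on $D$ for all $t$; i.e. $\varphi$ is a (local) solution of the Lagrangian incompressible Euler equations.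
   Context: Jet notation: for a function $f$ of $\alpha=(\alpha_1,\alpha_2)$, $f_{10}=\partial f/\partial\alpha_1$ and $f_{01}=\partial f/\partial\alpha_2$. For $\varphi(t,\alpha)=\varphi^t(\alpha)$, primes denote derivatives in $t$, $d\varphi^t$ is the Jacobian in $\alpha$, $\nabla_\alpha$ the gradient in $\alpha$. *)

(* Defs.v *)
From Stdlib Require Import Reals Lra.
Open Scope R_scope.

Definition open2 (D : R -> R -> Prop) : Prop :=
  forall x y, D x y -> exists e, 0 < e /\
    forall x' y', Rabs (x' - x) < e -> Rabs (y' - y) < e -> D x' y'.

Definition dist2 (p q : R * R) : R :=
  Rmax (Rabs (fst p - fst q)) (Rabs (snd p - snd q)).

Definition cont_path (g : R -> R * R) : Prop :=
  forall s, 0 <= s <= 1 -> forall eps, 0 < eps -> exists delta, 0 < delta /\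
    forall s', 0 <= s' <= 1 -> Rabs (s' - s) < delta -> dist2 (g s') (g s) < eps.

Definition cont_square (H : R -> R -> R * R) : Prop :=
  forall u s, 0 <= u <= 1 -> 0 <= s <= 1 -> forall eps, 0 < eps ->
    exists delta, 0 < delta /\
    forall u' s', 0 <= u' <= 1 -> 0 <= s' <= 1 ->
      Rabs (u' - u) < delta -> Rabs (s' - s) < delta ->
      dist2 (H u' s') (H u s) < eps.

Definition path_in (D : R -> R -> Prop) (g : R -> R * R) : Prop :=
  cont_path g /\ forall s, 0 <= s <= 1 -> D (fst (g s)) (snd (g s)).

Definition domain2 (D : R -> R -> Prop) : Prop :=
  open2 D /\ (exists x y, D x y) /\
  forall x1 y1 x2 y2, D x1 y1 -> D x2 y2 ->
    exists g, path_in D g /\ g 0 = (x1, y1) /\ g 1 = (x2, y2).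

Definition simply_connected_domain (D : R -> R -> Prop) : Prop :=
  domain2 D /\
  forall g, path_in D g -> g 0 = g 1 ->
    exists H : R -> R -> R * R, cont_square H /\
      (forall u s, 0 <= u <= 1 -> 0 <= s <= 1 -> D (fst (H u s)) (snd (H u s))) /\
      (forall s, 0 <= s <= 1 -> H 0 s = g s) /\
      (forall s, 0 <= s <= 1 -> H 1 s = g 0) /\
      (forall u, 0 <= u <= 1 -> H u 0 = g 0 /\ H u 1 = g 0).

Definition has_d10_at (f : R -> R -> R) (a1 a2 l : R) : Prop :=
  derivable_pt_lim (fun x => f x a2) a1 l.
Definition has_d01_at (f : R -> R -> R) (a1 a2 l : R) : Prop :=
  derivable_pt_lim (fun y => f a1 y) a2 l.

Definition is_d10_on (D : R -> R -> Prop) (f g : R -> R -> R) : Prop :=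
  forall a1 a2, D a1 a2 -> has_d10_at f a1 a2 (g a1 a2).
Definition is_d01_on (D : R -> R -> Prop) (f g : R -> R -> R) : Prop :=
  forall a1 a2, D a1 a2 -> has_d01_at f a1 a2 (g a1 a2).

Definition cont_on (D : R -> R -> Prop) (f : R -> R -> R) : Prop :=
  forall a1 a2, D a1 a2 -> forall eps, 0 < eps -> exists delta, 0 < delta /\
    forall b1 b2, Rabs (b1 - a1) < delta -> Rabs (b2 - a2) < delta ->
      Rabs (f b1 b2 - f a1 a2) < eps.

Fixpoint Ck (k : nat) (D : R -> R -> Prop) (f : R -> R -> R) : Prop :=
  match k with
  | O => cont_on D f
  | S k' => cont_on D f /\ exists g1 g2, is_d10_on D f g1 /\ is_d01_on D f g2 /\
                         Ck k' D g1 /\ Ck k' D g2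
  end.

Definition smooth_on (D : R -> R -> Prop) (f : R -> R -> R) : Prop :=
  forall k, Ck k D f.

Definition phi1 (mu theta : R) (v1 v2 w1 w2 : R -> R -> R) (t a1 a2 : R) : R :=
  cos (mu * t) * v1 a1 a2 - sin (mu * t) * v2 a1 a2
  + (cos (theta * t) * w1 a1 a2 - sin (theta * t) * w2 a1 a2).
Definition phi2 (mu theta : R) (v1 v2 w1 w2 : R -> R -> R) (t a1 a2 : R) : R :=
  sin (mu * t) * v1 a1 a2 + cos (mu * t) * v2 a1 a2
  + (sin (theta * t) * w1 a1 a2 + cos (theta * t) * w2 a1 a2).

Definition has_second_deriv (f : R -> R) (t l : R) : Prop :=
  exists g : R -> R, (forall s, derivable_pt_lim f s (g s)) /\ derivable_pt_lim g t l.

(* Main.v *)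
Require Import Defs.
From Stdlib Require Import Reals.
From Coquelicot Require Import Coquelicot.
From Stdlib Require Import Reals Lra Lia Arith Classical ClassicalEpsilon.
Open Scope R_scope.


Lemma in_hull c y t r : Rabs (y-c) < r -> Rmin c y <= t <= Rmax c y -> Rabs (t - c) < r.
Proof.
  intros H [H1 H2]. unfold Rmin, Rmax in *. apply Rabs_def2 in H. destruct H.
  destruct (Rle_dec c y); apply Rabs_def1; lra.
Qed.

Lemma cont_x D f a b : cont_on D f -> D a b -> continuous (fun x => f x b) a.
Proof.
  intros cf Dab. apply filterlim_locally. intros eps.
  destruct (cf a b Dab eps (cond_pos eps)) as [d [dp H]].
  exists (mkposreal d dp). intros x Hx. apply H; [exact Hx|].
  rewrite Rminus_diag, Rabs_R0; exact dp.
Qed.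

Lemma cont_y D f a b : cont_on D f -> D a b -> continuous (fun y => f a y) b.
Proof.
  intros cf Dab. apply filterlim_locally. intros eps.
  destruct (cf a b Dab eps (cond_pos eps)) as [d [dp H]].
  exists (mkposreal d dp). intros x Hx. apply H; [|exact Hx].
  rewrite Rminus_diag, Rabs_R0; exact dp.
Qed.

Lemma loc_of (y : R) (Pr : R -> Prop) (e:R) : 0 < e -> (forall b, Rabs (b - y) < e -> Pr b) -> locally y Pr.
Proof. intros he H. exists (mkposreal e he). intros b Hb. apply H. exact Hb. Qed.

Lemma c2d_ext (g h : R->R->R) x t rho : 0 < rho ->
  (forall u v, Rabs (u-x) < rho -> Rabs (v-t) < rho -> g u v = h u v) ->
  (forall eps, 0<eps -> exists d, 0<d /\ forall u v, Rabs(u-x)<d -> Rabs(v-t)<d -> Rabs(h u v - h x t)<eps) ->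
  continuity_2d_pt g x t.
Proof.
  intros hr He Hc eps. destruct (Hc eps (cond_pos eps)) as [d [dp H]].
  assert (hm : 0 < Rmin d rho) by (apply Rmin_pos; lra).
  exists (mkposreal _ hm). simpl. intros u v Hu Hv.
  assert (Hu1 := Rlt_le_trans _ _ _ Hu (Rmin_l d rho)).
  assert (Hu2 := Rlt_le_trans _ _ _ Hu (Rmin_r d rho)).
  assert (Hv1 := Rlt_le_trans _ _ _ Hv (Rmin_l d rho)).
  assert (Hv2 := Rlt_le_trans _ _ _ Hv (Rmin_r d rho)).
  rewrite (He u v Hu2 Hv2), (He x t); try (rewrite Rminus_diag, Rabs_R0; lra).
  apply H; assumption.
Qed.

Lemma zero_deriv_eq (g : R -> R) a b :
  (forall t, Rmin a b <= t <= Rmax a b -> derivable_pt_lim g t 0) -> g a = g b.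
Proof.
  intros H.
  assert (Hi : is_RInt (fun _ => 0) a b (minus (g b) (g a))).
  { apply (is_RInt_derive g (fun _ => 0)).
    - intros x Hx. apply is_derive_Reals. apply H; exact Hx.
    - intros x _. apply continuous_const. }
  assert (E1 := is_RInt_unique _ _ _ _ Hi).
  rewrite (is_RInt_unique _ _ _ _ (is_RInt_const a b 0)) in E1. clear Hi. rename E1 into Hi.
  unfold scal, minus, plus, opp in Hi; simpl in Hi. unfold mult in Hi; simpl in Hi.
  lra.
Qed.

Section Local.
Variables (D : R -> R -> Prop) (P Q Py Qx : R -> R -> R).
Hypotheses (cP : cont_on D P) (cQ : cont_on D Q) (cPy : cont_on D Py) (cQx: cont_on D Qx)
  (dPy : is_d01_on D P Py) (dQx : is_d10_on D Q Qx)
  (eqPQ : forall x y, D x y -> Py x y = Qx x y).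

Definition Gp (c1 c2 x y : R) := RInt (fun s => P s c2) c1 x + RInt (fun s => Q x s) c2 y.

Lemma Gp_d c1 c2 r x y : 0 < r ->
  (forall a b, Rabs (a-c1) < r -> Rabs (b-c2) < r -> D a b) ->
  Rabs (x-c1) < r -> Rabs (y-c2) < r ->
  has_d10_at (Gp c1 c2) x y (P x y) /\ has_d01_at (Gp c1 c2) x y (Q x y).
Proof.
  intros hr hD hx hy.
  assert (Hc : Rabs (c1 - c1) < r /\ Rabs (c2 - c2) < r) by (rewrite !Rminus_diag, Rabs_R0; lra).
  destruct Hc as [Hc1 Hc2].
  set (ex := r - Rabs (x - c1)). set (ey := r - Rabs (y - c2)).
  assert (hex : 0 < ex) by (unfold ex; lra). assert (hey : 0 < ey) by (unfold ey; lra).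
  assert (nx : forall x', Rabs (x' - x) < ex -> Rabs (x' - c1) < r).
  { intros x' H. unfold ex in H. replace (x' - c1) with ((x'-x) + (x - c1)) by ring.
    eapply Rle_lt_trans; [apply Rabs_triang|]. lra. }
  assert (ny : forall y', Rabs (y' - y) < ey -> Rabs (y' - c2) < r).
  { intros y' H. unfold ey in H. replace (y' - c2) with ((y'-y) + (y - c2)) by ring.
    eapply Rle_lt_trans; [apply Rabs_triang|]. lra. }
  assert (exQ : forall x' b, Rabs (x' - c1) < r -> Rabs (b - c2) < r -> ex_RInt (fun t => Q x' t) c2 b).
  { intros x' b H1 H2. apply (ex_RInt_continuous (V:=R_CompleteNormedModule)). intros z Hz.
    apply (cont_y D). exact cQ. apply hD; [exact H1|]. apply (in_hull c2 b z r H2 Hz). }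
  assert (exP : forall b, Rabs (b - c1) < r -> ex_RInt (fun t => P t c2) c1 b).
  { intros b H2. apply (ex_RInt_continuous (V:=R_CompleteNormedModule)). intros z Hz.
    apply (cont_x D). exact cP. apply hD; [|exact Hc2]. apply (in_hull c1 b z r H2 Hz). }
  split.
  - unfold has_d10_at, Gp. apply is_derive_Reals.
    replace (P x y) with (P x c2 + (P x y - P x c2)) by ring.
    apply @is_derive_plus.
    + apply (is_derive_RInt (fun s => P s c2) (fun b => RInt (fun s => P s c2) c1 b) c1 x).
      * apply (loc_of x _ ex hex). intros b Hb. apply (RInt_correct (V:=R_CompleteNormedModule)). apply exP, nx, Hb.
      * apply (cont_x D). exact cP. apply hD; assumption.
    + assert (E : RInt (fun t => Derive (fun u => Q u t) x) c2 y = P x y - P x c2).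
      { rewrite (RInt_ext _ (fun t => Py x t)).
        - apply is_RInt_unique.
          apply (is_RInt_derive (fun t => P x t) (fun t => Py x t) c2 y).
          + intros t Ht. apply is_derive_Reals. apply (dPy x t). apply hD; [exact hx|].
            apply (in_hull c2 y _ r hy); try assumption.
          + intros t Ht. apply (cont_y D). exact cPy. apply hD; [exact hx|]. apply (in_hull c2 y _ r hy); try assumption.
        - intros t Ht. assert (Dt : D x t). { apply hD; [exact hx|]. apply (in_hull c2 y _ r hy); try assumption.
            split; apply Rlt_le; apply Ht. }
          rewrite eqPQ by exact Dt. apply is_derive_unique. apply is_derive_Reals. apply dQx. exact Dt. }
      rewrite <- E.
      apply (is_derive_RInt_param (fun u t => Q u t) c2 y x).
      * apply (loc_of x _ ex hex). intros x0 Hx0 t Ht. exists (Qx x0 t). apply is_derive_Reals.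
        apply dQx. apply hD; [apply nx, Hx0|]. apply (in_hull c2 y _ r hy); try assumption.
      * intros t Ht. assert (Ht' : Rabs (t - c2) < r) by (apply (in_hull c2 y _ r hy); assumption).
        set (et := r - Rabs (t - c2)).
        apply (c2d_ext _ Qx x t (Rmin ex et)).
        { apply Rmin_pos; unfold et; lra. }
        { intros u v Hu Hv. apply is_derive_unique. apply is_derive_Reals. apply dQx. apply hD.
          - apply nx. eapply Rlt_le_trans; [exact Hu| apply Rmin_l].
          - replace (v - c2) with ((v-t) + (t - c2)) by ring.
            eapply Rle_lt_trans; [apply Rabs_triang|].
            assert (Rabs (v - t) < et) by (eapply Rlt_le_trans; [exact Hv| apply Rmin_r]).
            unfold et in *; lra. }
        { intros eps he. apply (cQx x t). apply hD; assumption. exact he. }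
      * apply (loc_of x _ ex hex). intros x0 Hx0. apply exQ; [apply nx, Hx0| exact hy].
  - unfold has_d01_at, Gp. apply is_derive_Reals.
    replace (Q x y) with (0 + Q x y) by ring.
    apply @is_derive_plus. apply (is_derive_const (K:=R_AbsRing) (V:=R_NormedModule)).
    apply (is_derive_RInt (fun s => Q x s) (fun b => RInt (fun s => Q x s) c2 b) c2 y).
    + apply (loc_of y _ ey hey). intros b Hb. apply (RInt_correct (V:=R_CompleteNormedModule)). apply exQ; [exact hx| apply ny, Hb].
    + apply (cont_y D). exact cQ. apply hD; assumption.
Qed.
End Local.


Lemma hull2 a u v t r : Rabs (u-a) < r -> Rabs (v-a) < r -> Rmin u v <= t <= Rmax u v -> Rabs (t - a) < r.
Proof.
  intros H H' [H1 H2]. unfold Rmin, Rmax in *. apply Rabs_def2 in H. apply Rabs_def2 in H'.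
  destruct H, H'. destruct (Rle_dec u v); apply Rabs_def1; lra.
Qed.

Lemma prim_diff (P Q f g : R -> R -> R) a1 a2 rho :
  (forall x y, Rabs (x-a1) < rho -> Rabs (y-a2) < rho ->
     has_d10_at f x y (P x y) /\ has_d01_at f x y (Q x y)) ->
  (forall x y, Rabs (x-a1) < rho -> Rabs (y-a2) < rho ->
     has_d10_at g x y (P x y) /\ has_d01_at g x y (Q x y)) ->
  forall x y x' y', Rabs (x-a1) < rho -> Rabs (y-a2) < rho ->
     Rabs (x'-a1) < rho -> Rabs (y'-a2) < rho ->
  f x' y' - f x y = g x' y' - g x y.
Proof.
  intros Hf Hg x y x' y' hx hy hx' hy'.
  set (h := fun u v => f u v - g u v).
  assert (E1 : h x y = h x' y).
  { apply (zero_deriv_eq (fun u => h u y)). intros t Ht.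
    assert (ht : Rabs (t - a1) < rho) by (apply (hull2 a1 x x' t rho); assumption).
    replace 0 with (P t y - P t y) by ring. unfold h.
    apply derivable_pt_lim_minus; [apply (Hf t y ht hy) | apply (Hg t y ht hy)]. }
  assert (E2 : h x' y = h x' y').
  { apply (zero_deriv_eq (fun v => h x' v)). intros t Ht.
    assert (ht : Rabs (t - a2) < rho) by (apply (hull2 a2 y y' t rho); assumption).
    replace 0 with (Q x' t - Q x' t) by ring. unfold h.
    apply derivable_pt_lim_minus; [apply (Hf x' t hx' ht) | apply (Hg x' t hx' ht)]. }
  unfold h in *. lra.
Qed.

Section Cell.
Variables (D : R -> R -> Prop) (P Q Py Qx : R -> R -> R).
Hypotheses (cP : cont_on D P) (cQ : cont_on D Q) (cPy : cont_on D Py) (cQx: cont_on D Qx)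
  (dPy : is_d01_on D P Py) (dQx : is_d10_on D Q Qx)
  (eqPQ : forall x y, D x y -> Py x y = Qx x y).

Definition sqd (c : R*R) r (z : R*R) := Rabs (fst z - fst c) < r /\ Rabs (snd z - snd c) < r.
Definition good (c : R*R) r := 0 < r /\ forall z, sqd c r z -> D (fst z) (snd z).
Definition Gc (c z : R*R) := Gp P Q (fst c) (snd c) (fst z) (snd z).

Lemma Gc_self z : Gc z z = 0.
Proof. unfold Gc, Gp. rewrite !RInt_point. unfold zero; simpl; ring. Qed.

Lemma cell c r z z' : good c (3*r) -> sqd c r z -> sqd c r z' -> Gc z z' = Gc c z' - Gc c z.
Proof.
  intros [hr hD] [hz1 hz2] [hz1' hz2'].
  assert (hr' : 0 < r) by lra.
  assert (HDc : forall a b, Rabs (a - fst c) < 3*r -> Rabs (b - snd c) < 3*r -> D a b).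
  { intros a b ha hb. apply (hD (a,b)). split; assumption. }
  assert (near : forall a b, Rabs (a - fst z) < 2*r -> Rabs (b - snd z) < 2*r ->
     Rabs (a - fst c) < 3*r /\ Rabs (b - snd c) < 3*r).
  { intros a b ha hb. split.
    - replace (a - fst c) with ((a - fst z) + (fst z - fst c)) by ring.
      eapply Rle_lt_trans; [apply Rabs_triang|]. lra.
    - replace (b - snd c) with ((b - snd z) + (snd z - snd c)) by ring.
      eapply Rle_lt_trans; [apply Rabs_triang|]. lra. }
  assert (E := prim_diff P Q (Gp P Q (fst z) (snd z)) (Gp P Q (fst c) (snd c)) (fst z) (snd z) (2*r)).
  specialize (E ltac:(intros x y hx hy; apply (Gp_d D P Q Py Qx cP cQ cPy cQx dPy dQx eqPQ _ _ (2*r));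
                       [lra | intros a b ha hb; destruct (near a b ha hb); apply HDc; assumption | assumption | assumption])).
  specialize (E ltac:(intros x y hx hy; destruct (near x y hx hy);
                      apply (Gp_d D P Q Py Qx cP cQ cPy cQx dPy dQx eqPQ _ _ (3*r)); [lra | intros a b ha hb; apply HDc; assumption | assumption | assumption])).
  assert (a1 : Rabs (fst z - fst z) < 2*r) by (rewrite Rminus_diag, Rabs_R0; lra).
  assert (a2 : Rabs (snd z - snd z) < 2*r) by (rewrite Rminus_diag, Rabs_R0; lra).
  assert (b1 : Rabs (fst z' - fst z) < 2*r).
  { replace (fst z' - fst z) with ((fst z' - fst c) - (fst z - fst c)) by ring.
    eapply Rle_lt_trans; [apply Rabs_triang|]. rewrite Rabs_Ropp. lra. }
  assert (b2 : Rabs (snd z' - snd z) < 2*r).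
  { replace (snd z' - snd z) with ((snd z' - snd c) - (snd z - snd c)) by ring.
    eapply Rle_lt_trans; [apply Rabs_triang|]. rewrite Rabs_Ropp. lra. }
  specialize (E _ _ _ _ a1 a2 b1 b2).
  assert (Z := Gc_self z). unfold Gc in *. lra.
Qed.
End Cell.


Lemma abs_le_bt x y : Rabs x <= y -> -y <= x <= y.
Proof. unfold Rabs; destruct (Rcase_abs x); lra. Qed.

Lemma pow2_pos n : 0 < 2 ^ n.
Proof. apply pow_lt; lra. Qed.

Lemma INR_le_pow2 n : INR n <= 2 ^ n.
Proof.
  induction n. simpl; lra. rewrite S_INR. simpl.
  assert (1 <= 2 ^ n) by (apply pow_R1_Rle; lra). lra.
Qed.

Lemma pow2_small e : 0 < e -> exists n, / 2 ^ n < e.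
Proof.
  intros he. destruct (archimed_cor1 e he) as [N [HN HN0]]. exists N.
  eapply Rle_lt_trans; [|exact HN]. apply Rinv_le_contravar.
  apply lt_0_INR; assumption. apply INR_le_pow2.
Qed.

Lemma nest_sup (a w : nat -> R) : (forall n, a n <= a (S n)) ->
  (forall n, a (S n) + w (S n) <= a n + w n) -> (forall n, 0 <= w n) ->
  exists l, forall n, a n <= l <= a n + w n.
Proof.
  intros h1 h2 h3.
  assert (inv : forall n k, a n <= a (n+k)%nat /\ a (n+k)%nat + w (n+k)%nat <= a n + w n).
  { intros n k. induction k. rewrite Nat.add_0_r. lra.
    rewrite Nat.add_succ_r. specialize (h1 (n+k)%nat). specialize (h2 (n+k)%nat). lra. }
  assert (ub : forall n m, a m <= a n + w n).
  { intros n m. destruct (le_lt_dec n m) as [l|l].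
    - destruct (inv n (m - n)%nat) as [_ H]. replace (n + (m-n))%nat with m in H by lia.
      specialize (h3 m). lra.
    - destruct (inv m (n - m)%nat) as [H _]. replace (m + (n-m))%nat with n in H by lia.
      specialize (h3 n). lra. }
  set (E := fun x => exists n, x = a n).
  destruct (completeness E) as [l [Hl1 Hl2]].
  - exists (a 0%nat + w 0%nat). intros x [n ->]. apply ub.
  - exists (a 0%nat). exists 0%nat. reflexivity.
  - exists l. intros n. split.
    + apply Hl1. exists n; reflexivity.
    + apply Hl2. intros x [m ->]. apply ub.
Qed.

Lemma nested (B : R -> R -> R -> Prop) : B 0 0 1 ->
  (forall a b w, 0 < w -> B a b w -> exists a' b', B a' b' (w/2) /\
      a <= a' <= a + w/2 /\ b <= b' <= b + w/2) ->
  exists a0 b0, 0 <= a0 <= 1 /\ 0 <= b0 <= 1 /\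
    forall n, exists a b, B a b (/2^n) /\ a <= a0 <= a + /2^n /\ b <= b0 <= b + /2^n.
Proof.
  intros h0 hs.
  assert (Ht : forall (p : R*R) (w : R), exists q : R*R, (0 < w /\ B (fst p) (snd p) w) ->
      B (fst q) (snd q) (w/2) /\ fst p <= fst q <= fst p + w/2 /\ snd p <= snd q <= snd p + w/2).
  { intros p w. destruct (classic (0 < w /\ B (fst p) (snd p) w)) as [[hw hb]|hn].
    - destruct (hs _ _ _ hw hb) as [a' [b' H]]. exists (a', b'). intros _. exact H.
    - exists p. intros h. contradiction. }
  set (step := fun p w => proj1_sig (constructive_indefinite_description _ (Ht p w))).
  assert (Hstep : forall p w, 0 < w -> B (fst p) (snd p) w ->
     B (fst (step p w)) (snd (step p w)) (w/2) /\ fst p <= fst (step p w) <= fst p + w/2 /\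
     snd p <= snd (step p w) <= snd p + w/2).
  { intros p w hw hb. unfold step. destruct (constructive_indefinite_description _ (Ht p w)) as [q hq].
    simpl. apply hq. split; assumption. }
  set (seq := fix seq (n : nat) : R*R := match n with O => (0,0) | S k => step (seq k) (/2^k) end).
  assert (w2 : forall n, /2 ^ S n = /2^n/2).
  { intros n. simpl. assert (0 < 2^n) by apply pow2_pos. field. lra. }
  assert (HB : forall n, B (fst (seq n)) (snd (seq n)) (/2^n)).
  { induction n. simpl. replace (/1) with 1 by field. exact h0.
    simpl seq. rewrite w2. apply Hstep; [apply Rinv_0_lt_compat, pow2_pos | exact IHn]. }
  assert (HN : forall n, fst (seq n) <= fst (seq (S n)) <= fst (seq n) + /2^n/2 /\
     snd (seq n) <= snd (seq (S n)) <= snd (seq n) + /2^n/2).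
  { intros n. simpl seq. destruct (Hstep (seq n) (/2^n)) as [_ [h1 h2]].
    apply Rinv_0_lt_compat, pow2_pos. apply HB. split; assumption. }
  destruct (nest_sup (fun n => fst (seq n)) (fun n => /2^n)) as [a0 Ha].
  { intros n. apply HN. }
  { intros n. rewrite w2. destruct (HN n) as [[h1 h2] _]. lra. }
  { intros n. left. apply Rinv_0_lt_compat, pow2_pos. }
  destruct (nest_sup (fun n => snd (seq n)) (fun n => /2^n)) as [b0 Hb].
  { intros n. apply HN. }
  { intros n. rewrite w2. destruct (HN n) as [_ [h1 h2]]. lra. }
  { intros n. left. apply Rinv_0_lt_compat, pow2_pos. }
  exists a0, b0.
  assert (E0 : / 2 ^ 0 = 1) by (simpl; field).
  split. { specialize (Ha 0%nat). simpl in Ha. rewrite Rinv_1 in Ha. lra. }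
  split. { specialize (Hb 0%nat). simpl in Hb. rewrite Rinv_1 in Hb. lra. }
  intros n. exists (fst (seq n)), (snd (seq n)). split; [apply HB|]. split; [apply Ha|apply Hb].
Qed.

Section Leb.
Variables (D : R -> R -> Prop) (H : R -> R -> R*R).
Hypotheses (oD : open2 D) (cH : cont_square H)
  (inD : forall u s, 0 <= u <= 1 -> 0 <= s <= 1 -> D (fst (H u s)) (snd (H u s))).

Definition goodreg a b w := exists lam, 0 < lam /\ forall u0 s0, 0 <= u0 <= 1 -> 0 <= s0 <= 1 ->
  a <= u0 <= a + w -> b <= s0 <= b + w ->
  exists c r, good D c (3*r) /\ forall u s, 0 <= u <= 1 -> 0 <= s <= 1 ->
     Rabs (u - u0) <= lam -> Rabs (s - s0) <= lam -> sqd c r (H u s).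

Lemma local_leb u1 s1 : 0 <= u1 <= 1 -> 0 <= s1 <= 1 ->
  exists d, 0 < d /\ exists c r, good D c (3*r) /\ forall u s, 0 <= u <= 1 -> 0 <= s <= 1 ->
     Rabs (u - u1) < d -> Rabs (s - s1) < d -> sqd c r (H u s).
Proof.
  intros hu hs. destruct (oD _ _ (inD u1 s1 hu hs)) as [e [he HE]].
  destruct (cH u1 s1 hu hs (e/3)) as [d [hd Hd]]. lra.
  exists d. split; [exact hd|]. exists (H u1 s1), (e/3). split.
  - split. lra. intros z [h1 h2]. apply HE; lra.
  - intros u s hu' hs' h1 h2. specialize (Hd u s hu' hs' h1 h2). unfold dist2 in Hd.
    apply Rmax_Rlt in Hd. unfold sqd. lra.
Qed.

Lemma split_reg a b w : 0 < w -> goodreg a b (w/2) -> goodreg (a + w/2) b (w/2) ->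
  goodreg a (b + w/2) (w/2) -> goodreg (a+w/2) (b+w/2) (w/2) -> goodreg a b w.
Proof.
  intros hw [l1 [p1 H1]] [l2 [p2 H2]] [l3 [p3 H3]] [l4 [p4 H4]].
  set (l := Rmin (Rmin l1 l2) (Rmin l3 l4)).
  assert (hl1 : l <= l1) by (unfold l; eapply Rle_trans; apply Rmin_l).
  assert (hl2 : l <= l2) by (unfold l; eapply Rle_trans; [apply Rmin_l| apply Rmin_r]).
  assert (hl3 : l <= l3) by (unfold l; eapply Rle_trans; [apply Rmin_r| apply Rmin_l]).
  assert (hl4 : l <= l4) by (unfold l; eapply Rle_trans; apply Rmin_r).
  exists l. split. { unfold l. repeat apply Rmin_pos; assumption. }
  intros u0 s0 hu hs hau hbs.
  destruct (Rle_dec u0 (a + w/2)) as [q1|q1]; destruct (Rle_dec s0 (b + w/2)) as [q2|q2].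
  - destruct (H1 u0 s0 hu hs ltac:(lra) ltac:(lra)) as [c [r [hc hr]]]. exists c, r. split; [exact hc|].
    intros u s a1 a2 a3 a4. apply hr; auto; lra.
  - destruct (H3 u0 s0 hu hs ltac:(lra) ltac:(lra)) as [c [r [hc hr]]]. exists c, r. split; [exact hc|].
    intros u s a1 a2 a3 a4. apply hr; auto; lra.
  - destruct (H2 u0 s0 hu hs ltac:(lra) ltac:(lra)) as [c [r [hc hr]]]. exists c, r. split; [exact hc|].
    intros u s a1 a2 a3 a4. apply hr; auto; lra.
  - destruct (H4 u0 s0 hu hs ltac:(lra) ltac:(lra)) as [c [r [hc hr]]]. exists c, r. split; [exact hc|].
    intros u s a1 a2 a3 a4. apply hr; auto; lra.
Qed.

Lemma lebesgue : exists lam, 0 < lam /\ forall u0 s0, 0 <= u0 <= 1 -> 0 <= s0 <= 1 ->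
  exists c r, good D c (3*r) /\ forall u s, 0 <= u <= 1 -> 0 <= s <= 1 ->
     Rabs (u - u0) <= lam -> Rabs (s - s0) <= lam -> sqd c r (H u s).
Proof.
  apply NNPP. intros Hn.
  assert (B0 : ~ goodreg 0 0 1).
  { intros [l [hl Hl]]. apply Hn. exists l. split; [exact hl|]. intros u0 s0 hu hs.
    apply Hl; auto; lra. }
  destruct (nested (fun a b w => ~ goodreg a b w) B0) as [a0 [b0 [ha0 [hb0 Hn0]]]].
  { intros a b w hw hb. apply NNPP. intros Hq. apply hb. apply split_reg; [exact hw| | | |];
    apply NNPP; intros Hk; apply Hq.
    - exists a, b. split; [exact Hk|]. lra.
    - exists (a + w/2), b. split; [exact Hk|]. lra.
    - exists a, (b + w/2). split; [exact Hk|]. lra.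
    - exists (a + w/2), (b + w/2). split; [exact Hk|]. lra. }
  destruct (local_leb a0 b0 ha0 hb0) as [d [hd [c [r [hc Hc]]]]].
  destruct (pow2_small (d/2)) as [n hn]. lra.
  destruct (Hn0 n) as [a [b [hbad [h1 h2]]]]. apply hbad.
  exists (d/2). split. lra. intros u0 s0 hu hs hau hbs. exists c, r. split; [exact hc|].
  intros u s a1 a2 a3 a4. apply Hc; auto.
  - apply abs_le_bt in a3. apply Rabs_def1; lra.
  - apply abs_le_bt in a4. apply Rabs_def1; lra.
Qed.
End Leb.


Fixpoint psum (f : nat -> R) (n : nat) : R :=
  match n with O => 0 | S k => psum f k + f k end.

Lemma psum_ext f g n : (forall k, (k < n)%nat -> f k = g k) -> psum f n = psum g n.
Proof.
  induction n; intros H; simpl. reflexivity.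
  rewrite IHn by (intros; apply H; lia). rewrite H by lia. reflexivity.
Qed.

Lemma psum_add f a b : psum f (a + b) = psum f a + psum (fun j => f (a + j)%nat) b.
Proof.
  induction b; simpl. rewrite Nat.add_0_r. ring.
  rewrite Nat.add_succ_r. simpl. rewrite IHb. ring.
Qed.

Lemma psum_mul f N M : psum f (N * M) = psum (fun k => psum (fun j => f (k * M + j)%nat) M) N.
Proof.
  induction N; simpl. reflexivity.
  rewrite Nat.add_comm, psum_add, IHN. reflexivity.
Qed.

Lemma psum_tele h n : psum (fun j => h (S j) - h j) n = h n - h O.
Proof. induction n; simpl. ring. rewrite IHn. ring. Qed.

Lemma psum_zero n : psum (fun _ => 0) n = 0.
Proof. induction n; simpl; [|rewrite IHn]; ring. Qed.

Lemma dist2_lt a b e : dist2 a b < e <-> Rabs (fst a - fst b) < e /\ Rabs (snd a - snd b) < e.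
Proof. unfold dist2. apply Rmax_Rlt. Qed.

Lemma dist2_tri a b c e1 e2 : dist2 a b < e1 -> dist2 b c < e2 -> dist2 a c < e1 + e2.
Proof.
  rewrite !dist2_lt. intros [h1 h2] [h3 h4]. split.
  - replace (fst a - fst c) with ((fst a - fst b) + (fst b - fst c)) by ring.
    eapply Rle_lt_trans; [apply Rabs_triang|]. lra.
  - replace (snd a - snd c) with ((snd a - snd b) + (snd b - snd c)) by ring.
    eapply Rle_lt_trans; [apply Rabs_triang|]. lra.
Qed.

Lemma dist2_sym a b e : dist2 a b < e -> dist2 b a < e.
Proof. rewrite !dist2_lt. rewrite (Rabs_minus_sym (fst b)), (Rabs_minus_sym (snd b)). tauto. Qed.

Definition catp (g h : R -> R*R) (s : R) : R*R :=
  if Rle_dec s (1/2) then g (2*s) else h (2*s-1).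
Definition revp (g : R -> R*R) (s : R) : R*R := g (1 - s).
Definition segp (z z' : R*R) (s : R) : R*R :=
  (fst z + s * (fst z' - fst z), snd z + s * (snd z' - snd z)).

Lemma cont_cat g h : cont_path g -> cont_path h -> g 1 = h 0 -> cont_path (catp g h).
Proof.
  intros cg ch e s hs eps heps.
  assert (hsg : 0 <= Rmin (2*s) 1 <= 1) by (unfold Rmin; destruct (Rle_dec (2*s) 1); lra).
  assert (hsh : 0 <= Rmax (2*s-1) 0 <= 1) by (unfold Rmax; destruct (Rle_dec (2*s-1) 0); lra).
  destruct (cg _ hsg (eps/2)) as [d1 [hd1 H1]]. lra.
  destruct (ch _ hsh (eps/2)) as [d2 [hd2 H2]]. lra.
  exists (Rmin d1 d2 / 2). split. { assert (0 < Rmin d1 d2) by (apply Rmin_pos; assumption). lra. }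
  intros s' hs' hss.
  assert (hm1 := Rmin_l d1 d2). assert (hm2 := Rmin_r d1 d2).
  apply Rabs_def2 in hss. destruct hss as [hss1 hss2].
  replace eps with (eps/2 + eps/2) by field.
  unfold catp. destruct (Rle_dec s' (1/2)) as [q1|q1]; destruct (Rle_dec s (1/2)) as [q2|q2].
  - assert (Rmin (2*s) 1 = 2*s) by (unfold Rmin; destruct (Rle_dec (2*s) 1); lra).
    rewrite H in H1. assert (dist2 (g (2*s')) (g (2*s)) < eps/2) by (apply H1; [lra| apply Rabs_def1; lra]).
    lra.
  - assert (Rmin (2*s) 1 = 1) by (unfold Rmin; destruct (Rle_dec (2*s) 1); lra).
    assert (Rmax (2*s-1) 0 = 2*s-1) by (unfold Rmax; destruct (Rle_dec (2*s-1) 0); lra).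
    rewrite H in H1. rewrite H0 in H2.
    apply (dist2_tri _ (g 1)). apply H1; [lra| apply Rabs_def1; lra].
    rewrite e. apply H2; [lra| apply Rabs_def1; lra].
  - assert (Rmin (2*s) 1 = 2*s) by (unfold Rmin; destruct (Rle_dec (2*s) 1); lra).
    assert (Rmax (2*s-1) 0 = 0) by (unfold Rmax; destruct (Rle_dec (2*s-1) 0); lra).
    rewrite H in H1. rewrite H0 in H2.
    apply (dist2_tri _ (h 0)). apply H2; [lra| apply Rabs_def1; lra].
    rewrite <- e. apply H1; [lra| apply Rabs_def1; lra].
  - assert (Rmax (2*s-1) 0 = 2*s-1) by (unfold Rmax; destruct (Rle_dec (2*s-1) 0); lra).
    rewrite H in H2. assert (dist2 (h (2*s'-1)) (h (2*s-1)) < eps/2) by (apply H2; [lra| apply Rabs_def1; lra]).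
    lra.
Qed.

Lemma cont_rev g : cont_path g -> cont_path (revp g).
Proof.
  intros cg s hs eps heps. destruct (cg (1-s) ltac:(lra) eps heps) as [d [hd H]].
  exists d. split; [exact hd|]. intros s' hs' h. unfold revp. apply H. lra.
  replace (1 - s' - (1 - s)) with (-(s'-s)) by ring. rewrite Rabs_Ropp. exact h.
Qed.

Lemma cont_seg z z' : cont_path (segp z z').
Proof.
  intros s hs eps heps. set (K := 1 + Rabs (fst z' - fst z) + Rabs (snd z' - snd z)).
  assert (hK : 0 < K) by (unfold K; assert (0 <= Rabs (fst z' - fst z)) by apply Rabs_pos;
     assert (0 <= Rabs (snd z' - snd z)) by apply Rabs_pos; lra).
  exists (eps / K). split. apply Rdiv_lt_0_compat; assumption.
  intros s' hs' h. apply dist2_lt. unfold segp; simpl.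
  assert (hA := Rabs_pos (fst z' - fst z)). assert (hB := Rabs_pos (snd z' - snd z)).
  assert (hs0 := Rabs_pos (s' - s)).
  assert (hh : Rabs (s' - s) * K < eps).
  { apply (Rmult_lt_compat_r K) in h; [|exact hK]. unfold Rdiv in h.
    rewrite Rmult_assoc, Rinv_l, Rmult_1_r in h by lra. exact h. }
  split.
  - replace (fst z + s' * (fst z' - fst z) - (fst z + s * (fst z' - fst z))) with ((s'-s) * (fst z' - fst z)) by ring.
    rewrite Rabs_mult. unfold K in hh. nra.
  - replace (snd z + s' * (snd z' - snd z) - (snd z + s * (snd z' - snd z))) with ((s'-s) * (snd z' - snd z)) by ring.
    rewrite Rabs_mult. unfold K in hh. nra.
Qed.

Lemma psum_plus f g n : psum (fun k => f k + g k) n = psum f n + psum g n.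
Proof. induction n; simpl. ring. rewrite IHn. ring. Qed.

Lemma psum_opp f n : psum (fun k => - f k) n = - psum f n.
Proof. induction n; simpl. ring. rewrite IHn. ring. Qed.


Lemma frac_bounds k j n m : 0 < n -> 0 < m -> 0 <= j <= m ->
  k / n <= (k*m+j)/(n*m) <= (k+1)/n.
Proof.
  intros hn hm [hj1 hj2].
  replace ((k*m+j)/(n*m)) with (k/n + j/(n*m)) by (field; lra).
  replace ((k+1)/n) with (k/n + m/(n*m)) by (field; lra).
  assert (0 < /(n*m)) by (apply Rinv_0_lt_compat; nra).
  unfold Rdiv. split; nra.
Qed.

Lemma exists_N lam : 0 < lam -> exists N, (0 < N)%nat /\ 1 <= INR N * lam.
Proof.
  intros h. destruct (archimed_cor1 lam h) as [N [h1 h2]]. exists N. split; [exact h2|].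
  assert (0 < INR N) by (apply lt_0_INR; exact h2).
  apply (Rmult_lt_compat_l (INR N)) in h1; [|exact H]. rewrite Rinv_r in h1 by lra. lra.
Qed.

Section Disc.
Variables (D : R -> R -> Prop) (P Q Py Qx : R -> R -> R).
Hypotheses (cP : cont_on D P) (cQ : cont_on D Q) (cPy : cont_on D Py) (cQx: cont_on D Qx)
  (dPy : is_d01_on D P Py) (dQx : is_d10_on D Q Qx)
  (eqPQ : forall x y, D x y -> Py x y = Qx x y).

Definition pt (g : R -> R*R) N k := g (INR k / INR N).
Definition Ssum g N := psum (fun k => Gc P Q (pt g N k) (pt g N (S k))) N.
Definition fine (g : R -> R*R) N := (0 < N)%nat /\ forall k, (k < N)%nat ->
  exists c r, good D c (3*r) /\ forall s, INR k / INR N <= s <= INR (S k) / INR N -> sqd c r (g s).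

Let cellL := cell D P Q Py Qx cP cQ cPy cQx dPy dQx eqPQ.

Lemma tele_cell c r (a : nat -> R*R) n : good D c (3*r) -> (forall k, (k <= n)%nat -> sqd c r (a k)) ->
  psum (fun k => Gc P Q (a k) (a (S k))) n = Gc P Q c (a n) - Gc P Q c (a O).
Proof.
  intros hc ha. rewrite <- (psum_tele (fun k => Gc P Q c (a k))).
  apply psum_ext. intros k hk. apply cellL with r; [exact hc | apply ha; lia | apply ha; lia].
Qed.

Lemma refine g N M : fine g N -> (0 < M)%nat -> Ssum g (N*M) = Ssum g N.
Proof.
  intros [hN hf] hM. unfold Ssum. rewrite psum_mul. apply psum_ext. intros k hk.
  destruct (hf k hk) as [c [r [hc hs]]].
  assert (nN : 0 < INR N) by (apply lt_0_INR; exact hN).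
  assert (nM : 0 < INR M) by (apply lt_0_INR; exact hM).
  assert (inc : forall j, (j <= M)%nat -> sqd c r (pt g (N*M) (k*M+j))).
  { intros j hj. unfold pt. apply hs. rewrite plus_INR, !mult_INR, S_INR.
    apply frac_bounds; try assumption. split; [apply pos_INR| apply le_INR; exact hj]. }
  transitivity (psum (fun j => Gc P Q (pt g (N*M) (k*M+j)) (pt g (N*M) (k*M+ S j))) M).
  { apply psum_ext. intros j _. rewrite Nat.add_succ_r. reflexivity. }
  rewrite (tele_cell c r (fun j => pt g (N*M) (k*M+j)) M hc inc).
  rewrite <- (cellL c r); [| exact hc | apply inc; lia | apply inc; lia].
  unfold pt. rewrite Nat.add_0_r.
  replace (INR (k*M) / INR (N*M)) with (INR k / INR N) by (rewrite !mult_INR; field; lra).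
  replace (INR (k*M+M) / INR (N*M)) with (INR (S k) / INR N) by (rewrite plus_INR, !mult_INR, S_INR; field; lra).
  reflexivity.
Qed.

Lemma indep g N1 N2 : fine g N1 -> fine g N2 -> Ssum g N1 = Ssum g N2.
Proof.
  intros h1 h2. rewrite <- (refine g N1 N2 h1) by apply h2.
  rewrite <- (refine g N2 N1 h2) by apply h1. rewrite Nat.mul_comm. reflexivity.
Qed.

Definition lamprop (g : R -> R*R) lam := 0 < lam /\ forall s0, 0 <= s0 <= 1 ->
  exists c r, good D c (3*r) /\ forall s, 0 <= s <= 1 -> Rabs (s - s0) <= lam -> sqd c r (g s).

Lemma lam_fine g lam N : lamprop g lam -> (0 < N)%nat -> 1 <= INR N * lam -> fine g N.
Proof.
  intros [hl H] hN hNl. split; [exact hN|]. intros k hk.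
  assert (nN : 0 < INR N) by (apply lt_0_INR; exact hN).
  assert (hkN : INR k + 1 <= INR N) by (rewrite <- S_INR; apply le_INR; lia).
  assert (hk0 := pos_INR k).
  assert (b1 : 0 <= INR k / INR N) by (apply Rdiv_le_0_compat; lra).
  assert (b2 : INR k / INR N + / INR N <= 1).
  { replace (INR k / INR N + / INR N) with ((INR k + 1) / INR N) by (field; lra).
    apply (Rmult_le_reg_r (INR N)); [exact nN|]. unfold Rdiv. rewrite Rmult_assoc, Rinv_l by lra. lra. }
  assert (b3 : / INR N <= lam).
  { apply (Rmult_le_reg_l (INR N)); [exact nN|]. rewrite Rinv_r by lra. exact hNl. }
  assert (b4 : 0 < / INR N) by (apply Rinv_0_lt_compat; exact nN).
  destruct (H (INR k / INR N)) as [c [r [hc hs]]]. lra.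
  exists c, r. split; [exact hc|]. intros s hs'. rewrite S_INR in hs'.
  replace ((INR k + 1) / INR N) with (INR k / INR N + / INR N) in hs' by (field; lra).
  apply hs. lra. apply Rabs_le. lra.
Qed.

Lemma path_lam g : open2 D -> path_in D g -> exists lam, lamprop g lam.
Proof.
  intros oD [cg ig].
  destruct (lebesgue D (fun u s => g s) oD) as [lam [hl H]].
  { intros u s hu hs eps he. destruct (cg s hs eps he) as [d [hd Hd]]. exists d. split; [exact hd|].
    intros u' s' _ hs' _ h. apply Hd; assumption. }
  { intros u s _ hs. apply ig, hs. }
  exists lam. split; [exact hl|]. intros s0 hs0.
  destruct (H 0 s0 ltac:(lra) hs0) as [c [r [hc Hc]]]. exists c, r. split; [exact hc|].
  intros s hs h. apply (Hc 0 s); [lra | exact hs | rewrite Rminus_diag, Rabs_R0; lra | exact h].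
Qed.

Lemma homotopy_zero g N : simply_connected_domain D -> path_in D g -> g 0 = g 1 -> fine g N -> Ssum g N = 0.
Proof.
  intros [[oD _] hsc] hg hloop hfN.
  destruct (hsc g hg hloop) as [H [cH [iH [H0 [H1 Hb]]]]].
  destruct (lebesgue D H oD cH iH) as [lam [hl HL]].
  destruct (exists_N lam hl) as [K [hK hKl]].
  assert (nK : 0 < INR K) by (apply lt_0_INR; exact hK).
  assert (b3 : / INR K <= lam).
  { apply (Rmult_le_reg_l (INR K)); [exact nK|]. rewrite Rinv_r by lra. exact hKl. }
  assert (Hin : forall k, (k <= K)%nat -> 0 <= INR k / INR K <= 1).
  { intros k hk. split. apply Rdiv_le_0_compat; [apply pos_INR| exact nK].
    apply (Rmult_le_reg_r (INR K)); [exact nK|]. unfold Rdiv. rewrite Rmult_assoc, Rinv_l by lra.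
    rewrite Rmult_1_r, Rmult_1_l. apply le_INR; exact hk. }
  assert (fgK : fine g K).
  { apply (lam_fine g lam K); [| exact hK | exact hKl]. split; [exact hl|].
    intros s0 hs0. destruct (HL 0 s0 ltac:(lra) hs0) as [c [r [hc Hc]]]. exists c, r. split; [exact hc|].
    intros s hs h. rewrite <- (H0 s hs). apply Hc; [lra | exact hs | rewrite Rminus_diag, Rabs_R0; lra | exact h]. }
  rewrite (indep g N K hfN fgK).
  set (row := fun i : nat => fun s => H (INR i / INR K) s).
  assert (step : forall i, (i < K)%nat -> Ssum (row i) K = Ssum (row (S i)) K).
  { intros i hi.
    set (e := fun j => Gc P Q (pt (row i) K j) (pt (row (S i)) K j)).
    assert (E : forall j, (j < K)%nat -> Gc P Q (pt (row i) K j) (pt (row i) K (S j)) =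
        (e j - e (S j)) + Gc P Q (pt (row (S i)) K j) (pt (row (S i)) K (S j))).
    { intros j hj.
      destruct (HL (INR i / INR K) (INR j / INR K) ltac:(apply Hin; lia) ltac:(apply Hin; lia))
        as [c [r [hc Hc]]].
      assert (cor : forall a b, (a = i \/ a = S i) -> (b = j \/ b = S j) -> sqd c r (H (INR a / INR K) (INR b / INR K))).
      { intros a b ha hb. apply Hc; try (apply Hin; lia).
        - destruct ha as [->| ->]. rewrite Rminus_diag, Rabs_R0; lra.
          rewrite S_INR. replace ((INR i + 1) / INR K - INR i / INR K) with (/ INR K) by (field; lra).
          rewrite Rabs_right; [lra| left; apply Rinv_0_lt_compat; lra].
        - destruct hb as [->| ->]. rewrite Rminus_diag, Rabs_R0; lra.
          rewrite S_INR. replace ((INR j + 1) / INR K - INR j / INR K) with (/ INR K) by (field; lra).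
          rewrite Rabs_right; [lra| left; apply Rinv_0_lt_compat; lra]. }
      unfold e, pt, row.
      assert (q1 := cor i j (or_introl eq_refl) (or_introl eq_refl)).
      assert (q2 := cor i (S j) (or_introl eq_refl) (or_intror eq_refl)).
      assert (q3 := cor (S i) j (or_intror eq_refl) (or_introl eq_refl)).
      assert (q4 := cor (S i) (S j) (or_intror eq_refl) (or_intror eq_refl)).
      rewrite (cellL c r _ _ hc q1 q2), (cellL c r _ _ hc q1 q3), (cellL c r _ _ hc q2 q4),
        (cellL c r _ _ hc q3 q4). ring. }
    unfold Ssum. rewrite (psum_ext _ _ K E).
    transitivity (psum (fun j => e j - e (S j)) K + psum (fun j => Gc P Q (pt (row (S i)) K j) (pt (row (S i)) K (S j))) K).
    { apply psum_plus. }
    rewrite <- (psum_ext (fun j => - (e (S j) - e j))) by (intros; ring).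
    assert (T : psum (fun j => - (e (S j) - e j)) K = - (e K - e O)).
    { rewrite psum_opp, psum_tele. reflexivity. }
    rewrite T. unfold e, pt, row.
    replace (INR K / INR K) with 1 by (field; lra). replace (INR 0 / INR K) with 0 by (simpl; field; lra).
    destruct (Hb (INR i / INR K) ltac:(apply Hin; lia)) as [b0 b1].
    destruct (Hb (INR (S i) / INR K) ltac:(apply Hin; lia)) as [b0' b1'].
    rewrite b0, b1, b0', b1', Gc_self. ring. }
  assert (all : forall i, (i <= K)%nat -> Ssum (row O) K = Ssum (row i) K).
  { induction i; intros hi. reflexivity. rewrite IHi by lia. apply step; lia. }
  assert (E0 : Ssum g K = Ssum (row O) K).
  { unfold Ssum. apply psum_ext. intros k hk. unfold pt, row.
    replace (INR 0 / INR K) with 0 by (simpl; field; lra).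
    rewrite !H0 by (apply Hin; lia). reflexivity. }
  rewrite E0, (all K (le_n K)). unfold Ssum.
  rewrite <- (psum_zero K). apply psum_ext. intros k hk. unfold pt, row.
  replace (INR K / INR K) with 1 by (field; lra).
  rewrite !H1 by (apply Hin; lia). apply Gc_self.
Qed.
End Disc.


Section Exact.
Variables (D : R -> R -> Prop) (P Q Py Qx : R -> R -> R).
Hypotheses (hD : simply_connected_domain D)
  (cP : cont_on D P) (cQ : cont_on D Q) (cPy : cont_on D Py) (cQx: cont_on D Qx)
  (dPy : is_d01_on D P Py) (dQx : is_d10_on D Q Qx)
  (eqPQ : forall x y, D x y -> Py x y = Qx x y).

Let cellL := cell D P Q Py Qx cP cQ cPy cQx dPy dQx eqPQ.
Let SS := Ssum P Q.
Let FF := fine D.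

Lemma oD : open2 D. Proof. destruct hD as [[o _] _]. exact o. Qed.

Lemma cat_pt1 g h N k : (0 < N)%nat -> (k <= N)%nat -> catp g h (INR k / INR (2*N)) = g (INR k / INR N).
Proof.
  intros hN hk. assert (nN : 0 < INR N) by (apply lt_0_INR; exact hN).
  assert (hk' : INR k <= INR N) by (apply le_INR; exact hk).
  rewrite mult_INR. replace (INR 2) with 2 by (simpl; ring). unfold catp. destruct (Rle_dec (INR k / (2 * INR N)) (1/2)) as [q|q].
  - apply f_equal. field. lra.
  - exfalso. apply q. apply (Rmult_le_reg_r (2 * INR N)). lra. unfold Rdiv.
    rewrite Rmult_assoc, Rinv_l by lra. lra.
Qed.

Lemma cat_pt2 g h N j : (0 < N)%nat -> (j <= N)%nat -> g 1 = h 0 ->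
  catp g h (INR (N + j) / INR (2*N)) = h (INR j / INR N).
Proof.
  intros hN hj e. assert (nN : 0 < INR N) by (apply lt_0_INR; exact hN).
  rewrite mult_INR, plus_INR. replace (INR 2) with 2 by (simpl; ring). unfold catp.
  destruct (Rle_dec ((INR N + INR j) / (2 * INR N)) (1/2)) as [q|q].
  - assert (INR j = 0).
    { assert (0 <= INR j) by apply pos_INR.
      apply (Rmult_le_compat_r (2 * INR N)) in q; [|lra]. unfold Rdiv in q.
      rewrite Rmult_assoc, Rinv_l in q by lra. lra. }
    rewrite H. replace (2 * ((INR N + 0) / (2 * INR N))) with 1 by (field; lra).
    replace (0 / INR N) with 0 by (field; lra). exact e.
  - apply f_equal. field. lra.
Qed.

Lemma Ssum_cat g h N : g 1 = h 0 -> (0 < N)%nat -> SS (catp g h) (2*N) = SS g N + SS h N.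
Proof.
  intros e hN. unfold SS, Ssum. replace (2*N)%nat with (N+N)%nat by lia. rewrite psum_add.
  replace (N+N)%nat with (2*N)%nat by lia. f_equal.
  - apply psum_ext. intros k hk. unfold pt. rewrite !cat_pt1 by lia. reflexivity.
  - apply psum_ext. intros j hj. unfold pt. replace (S (N + j)) with (N + S j)%nat by lia. rewrite !cat_pt2 by (auto; lia). reflexivity.
Qed.

Lemma path_cat g h : path_in D g -> path_in D h -> g 1 = h 0 -> path_in D (catp g h).
Proof.
  intros [cg ig] [ch ih] e. split. apply cont_cat; assumption.
  intros s hs. unfold catp. destruct (Rle_dec s (1/2)). apply ig; lra. apply ih; lra.
Qed.

Lemma path_rev g : path_in D g -> path_in D (revp g).
Proof. intros [cg ig]. split. apply cont_rev; assumption. intros s hs. apply ig. lra. Qed.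

Lemma cat0 g h : catp g h 0 = g 0.
Proof. unfold catp. destruct (Rle_dec 0 (1/2)). apply f_equal; ring. lra. Qed.
Lemma cat1 g h : catp g h 1 = h 1.
Proof. unfold catp. destruct (Rle_dec 1 (1/2)). lra. apply f_equal; ring. Qed.

Lemma lam_fine' g l l' N : lamprop D g l -> 0 < l' <= l -> (0 < N)%nat -> 1 <= INR N * l' -> FF g N.
Proof.
  intros hl hl' hN h. apply (lam_fine D g l N hl hN).
  assert (0 <= INR N) by apply pos_INR. nra.
Qed.

Lemma wd g1 g2 N1 N2 a b : path_in D g1 -> path_in D g2 -> g1 0 = a -> g1 1 = b -> g2 0 = a -> g2 1 = b ->
  FF g1 N1 -> FF g2 N2 -> SS g1 N1 = SS g2 N2.
Proof.
  intros p1 p2 e1 e2 e3 e4 f1 f2.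
  assert (pr := path_rev g2 p2).
  assert (er0 : revp g2 0 = b) by (unfold revp; rewrite Rminus_0_r; exact e4).
  assert (er1 : revp g2 1 = a) by (unfold revp; rewrite Rminus_diag; exact e3).
  assert (pl1 : path_in D (catp g1 (revp g2))) by (apply path_cat; auto; congruence).
  assert (pl2 : path_in D (catp (revp g2) g2)) by (apply path_cat; auto; congruence).
  destruct (path_lam D g1 oD p1) as [l1 h1].
  destruct (path_lam D (revp g2) oD pr) as [l2 h2].
  destruct (path_lam D g2 oD p2) as [l3 h3].
  destruct (path_lam D _ oD pl1) as [l4 h4].
  destruct (path_lam D _ oD pl2) as [l5 h5].
  set (l := Rmin (Rmin l1 (Rmin l2 l3)) (Rmin l4 l5)).
  assert (hl : 0 < l).
  { destruct h1, h2, h3, h4, h5. unfold l. repeat apply Rmin_pos; assumption. }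
  assert (m1 : l <= l1) by (unfold l; repeat (eapply Rle_trans; [apply Rmin_l|]); lra).
  assert (m2 : l <= l2) by (unfold l; eapply Rle_trans; [apply Rmin_l|]; eapply Rle_trans; [apply Rmin_r|]; apply Rmin_l).
  assert (m3 : l <= l3) by (unfold l; eapply Rle_trans; [apply Rmin_l|]; eapply Rle_trans; [apply Rmin_r|]; apply Rmin_r).
  assert (m4 : l <= l4) by (unfold l; eapply Rle_trans; [apply Rmin_r|]; apply Rmin_l).
  assert (m5 : l <= l5) by (unfold l; eapply Rle_trans; [apply Rmin_r|]; apply Rmin_r).
  destruct (exists_N l hl) as [M [hM hMl]].
  assert (h2M : 1 <= INR (2*M) * l).
  { rewrite mult_INR. replace (INR 2) with 2 by (simpl; ring). assert (0 <= INR M) by apply pos_INR. nra. }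
  assert (h2M0 : (0 < 2*M)%nat) by lia.
  assert (L1 := homotopy_zero D P Q Py Qx cP cQ cPy cQx dPy dQx eqPQ _ (2*M) hD pl1
     ltac:(rewrite cat0, cat1; congruence) (lam_fine' _ _ _ _ h4 (conj hl m4) h2M0 h2M)).
  assert (L2 := homotopy_zero D P Q Py Qx cP cQ cPy cQx dPy dQx eqPQ _ (2*M) hD pl2
     ltac:(rewrite cat0, cat1; congruence) (lam_fine' _ _ _ _ h5 (conj hl m5) h2M0 h2M)).
  fold SS in L1, L2. rewrite Ssum_cat in L1, L2 by (auto; congruence).
  assert (F1 := lam_fine' _ _ _ _ h1 (conj hl m1) hM hMl).
  assert (F3 := lam_fine' _ _ _ _ h3 (conj hl m3) hM hMl).
  unfold SS in *.
  rewrite (indep D P Q Py Qx cP cQ cPy cQx dPy dQx eqPQ g1 N1 M f1 F1).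
  rewrite (indep D P Q Py Qx cP cQ cPy cQx dPy dQx eqPQ g2 N2 M f2 F3).
  lra.
Qed.

Lemma seg0 z z' : segp z z' 0 = z.
Proof. destruct z; unfold segp; simpl; f_equal; ring. Qed.
Lemma seg1 z z' : segp z z' 1 = z'.
Proof. destruct z, z'; unfold segp; simpl; f_equal; ring. Qed.

Lemma seg_in z z' r s : sqd z r z' -> 0 <= s <= 1 -> sqd z r (segp z z' s).
Proof.
  intros [h1 h2] hs. unfold sqd, segp; simpl.
  replace (fst z + s * (fst z' - fst z) - fst z) with (s * (fst z' - fst z)) by ring.
  replace (snd z + s * (snd z' - snd z) - snd z) with (s * (snd z' - snd z)) by ring.
  rewrite !Rabs_mult, (Rabs_right s) by lra.
  assert (0 <= Rabs (fst z' - fst z)) by apply Rabs_pos.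
  assert (0 <= Rabs (snd z' - snd z)) by apply Rabs_pos. split; nra.
Qed.

Lemma existsF : exists F : R -> R -> R, is_d10_on D F P /\ is_d01_on D F Q.
Proof.
  destruct hD as [[o [[x0 [y0 D0]] pc]] _].
  set (z0 := (x0, y0)).
  assert (tot : forall z : R*R, exists v, D (fst z) (snd z) -> exists g N, path_in D g /\ g 0 = z0 /\
     g 1 = z /\ FF g N /\ v = SS g N).
  { intros z. destruct (classic (D (fst z) (snd z))) as [Dz|nDz].
    - destruct (pc x0 y0 (fst z) (snd z) D0 Dz) as [g [pg [g0 g1]]].
      destruct (path_lam D g oD pg) as [l hl].
      destruct (exists_N l (proj1 hl)) as [N [hN hNl]].
      exists (SS g N). intros _. exists g, N. split; [exact pg|]. split; [exact g0|].
      split. rewrite g1; destruct z; reflexivity. split; [apply (lam_fine D g l N hl hN hNl)|reflexivity].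
    - exists 0. intros h. contradiction. }
  set (Fv := fun z => proj1_sig (constructive_indefinite_description _ (tot z))).
  assert (Fspec : forall z g N, D (fst z) (snd z) -> path_in D g -> g 0 = z0 -> g 1 = z -> FF g N -> Fv z = SS g N).
  { intros z g N Dz pg e0 e1 fg. unfold Fv. destruct (constructive_indefinite_description _ (tot z)) as [v hv].
    simpl. destruct (hv Dz) as [g' [N' [pg' [e0' [e1' [fg' ->]]]]]].
    apply (wd g' g N' N z0 z); assumption. }
  assert (key : forall z, D (fst z) (snd z) -> exists r, good D z (3*r) /\
      forall z', sqd z r z' -> Fv z' = Fv z + Gc P Q z z').
  { intros z Dz. destruct (o _ _ Dz) as [e [he HE]].
    exists (e/3). assert (gz : good D z (3*(e/3))).
    { split. lra. intros w [w1 w2]. apply HE; lra. }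
    split; [exact gz|]. intros z' hz'.
    destruct (pc x0 y0 (fst z) (snd z) D0 Dz) as [g [pg [g0 g1]]].
    assert (g1' : g 1 = z) by (rewrite g1; destruct z; reflexivity).
    assert (ps : path_in D (segp z z')).
    { split. apply cont_seg. intros s hs. apply gz. destruct (seg_in z z' (e/3) s hz' hs). split; lra. }
    assert (pcat : path_in D (catp g (segp z z'))) by (apply path_cat; auto; rewrite seg0; exact g1').
    destruct (path_lam D g oD pg) as [l1 h1].
    destruct (path_lam D _ oD pcat) as [l2 h2].
    assert (hl : 0 < Rmin l1 l2) by (apply Rmin_pos; [apply h1|apply h2]).
    destruct (exists_N _ hl) as [M [hM hMl]].
    assert (h2M : 1 <= INR (2*M) * Rmin l1 l2).
    { rewrite mult_INR. replace (INR 2) with 2 by (simpl; ring). assert (0 <= INR M) by apply pos_INR. nra. }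
    assert (E1 : Fv z = SS g M).
    { apply Fspec; auto. apply (lam_fine' g l1 (Rmin l1 l2)); auto. split; [exact hl| apply Rmin_l]. }
    assert (E2 : Fv z' = SS (catp g (segp z z')) (2*M)).
    { apply Fspec; auto.
      - apply gz. destruct hz'. split; lra.
      - rewrite cat0; exact g0.
      - rewrite cat1; apply seg1.
      - apply (lam_fine' _ l2 (Rmin l1 l2)); auto. split; [exact hl| apply Rmin_r]. lia. }
    rewrite E2, E1, Ssum_cat by (auto; rewrite seg0; exact g1').
    unfold SS, Ssum.
    rewrite (tele_cell D P Q Py Qx cP cQ cPy cQx dPy dQx eqPQ z (e/3) (fun k => pt (segp z z') M k) M gz).
    - unfold pt. replace (INR M / INR M) with 1 by (field; apply not_0_INR; lia).
      replace (INR 0 / INR M) with 0 by (simpl; field; apply not_0_INR; lia).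
      rewrite seg0, seg1, Gc_self. ring.
    - intros k hk. unfold pt. apply seg_in; [exact hz'|].
      assert (nM : 0 < INR M) by (apply lt_0_INR; exact hM).
      split. apply Rdiv_le_0_compat; [apply pos_INR|exact nM].
      apply (Rmult_le_reg_r (INR M)); [exact nM|]. unfold Rdiv. rewrite Rmult_assoc, Rinv_l by lra.
      rewrite Rmult_1_r, Rmult_1_l. apply le_INR; exact hk. }
  exists (fun x y => Fv (x, y)). split.
  - intros x y Dxy. destruct (key (x,y) Dxy) as [r [gz Hk]].
    unfold has_d10_at. apply is_derive_Reals.
    apply (is_derive_ext_loc (fun u => Fv (x,y) + Gp P Q x y u y)).
    + destruct gz as [hr _]. apply (loc_of x _ r). lra. intros b hb. rewrite (Hk (b,y)). reflexivity.
      split; simpl; [exact hb| rewrite Rminus_diag, Rabs_R0; lra].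
    + replace (P x y) with (0 + P x y) by ring. apply @is_derive_plus.
      apply (is_derive_const (K:=R_AbsRing) (V:=R_NormedModule)).
      apply is_derive_Reals. destruct gz as [hr hg].
      apply (Gp_d D P Q Py Qx cP cQ cPy cQx dPy dQx eqPQ x y (3*r)); try (rewrite Rminus_diag, Rabs_R0; lra).
      lra. intros a b ha hb. apply (hg (a,b)). split; assumption.
  - intros x y Dxy. destruct (key (x,y) Dxy) as [r [gz Hk]].
    unfold has_d01_at. apply is_derive_Reals.
    apply (is_derive_ext_loc (fun u => Fv (x,y) + Gp P Q x y x u)).
    + destruct gz as [hr _]. apply (loc_of y _ r). lra. intros b hb. rewrite (Hk (x,b)). reflexivity.
      split; simpl; [rewrite Rminus_diag, Rabs_R0; lra| exact hb].
    + replace (Q x y) with (0 + Q x y) by ring. apply @is_derive_plus.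
      apply (is_derive_const (K:=R_AbsRing) (V:=R_NormedModule)).
      apply is_derive_Reals. destruct gz as [hr hg].
      apply (Gp_d D P Q Py Qx cP cQ cPy cQx dPy dQx eqPQ x y (3*r)); try (rewrite Rminus_diag, Rabs_R0; lra).
      lra. intros a b ha hb. apply (hg (a,b)). split; assumption.
Qed.

End Exact.


Lemma Dloc (h k : R -> R) x l e : 0 < e -> (forall t, Rabs (t - x) < e -> h t = k t) ->
  derivable_pt_lim h x l -> derivable_pt_lim k x l /\ Derive k x = l.
Proof.
  intros he Hk Hd. assert (H : is_derive k x l).
  { apply (is_derive_ext_loc h). apply (loc_of x _ e he). exact Hk. apply is_derive_Reals. exact Hd. }
  split. apply is_derive_Reals; exact H. apply is_derive_unique; exact H.
Qed.

Lemma cont_ext_open D f g : open2 D -> cont_on D g -> (forall a b, D a b -> f a b = g a b) -> cont_on D f.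
Proof.
  intros o cg E a b Dab eps he. destruct (o a b Dab) as [e [hee HE]].
  destruct (cg a b Dab eps he) as [d [hd Hd]]. exists (Rmin d e). split. apply Rmin_pos; lra.
  intros b1 b2 h1 h2. assert (h1d := Rlt_le_trans _ _ _ h1 (Rmin_l d e)).
  assert (h1e := Rlt_le_trans _ _ _ h1 (Rmin_r d e)).
  assert (h2d := Rlt_le_trans _ _ _ h2 (Rmin_l d e)).
  assert (h2e := Rlt_le_trans _ _ _ h2 (Rmin_r d e)).
  rewrite (E b1 b2 (HE b1 b2 h1e h2e)), (E a b Dab). apply Hd; assumption.
Qed.

Lemma near_half a x e : Rabs (x - a) < e/2 -> forall z, Rabs (z - x) < e/2 -> Rabs (z - a) < e.
Proof.
  intros h z hz. replace (z - a) with ((z - x) + (x - a)) by ring.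
  eapply Rle_lt_trans; [apply Rabs_triang|]. lra.
Qed.

Lemma smooth_info D f f10 f01 : open2 D -> Ck 3 D f -> is_d10_on D f f10 -> is_d01_on D f f01 ->
  cont_on D f /\ cont_on D f10 /\ cont_on D f01 /\
  exists m, cont_on D m /\ is_d01_on D f10 m /\ is_d10_on D f01 m.
Proof.
  intros o [cf [g1 [g2 [d1 [d2 [[cg1 [g11 [g12 [d11 [d12 [C11 C12]]]]]] [cg2 [g21 [g22 [d21 [d22 [C21 C22]]]]]]]]]]]] h10 h01.
  destruct C12 as [cg12 _]. destruct C21 as [cg21 _].
  assert (e1 : forall a b, D a b -> f10 a b = g1 a b).
  { intros a b Dab. apply (uniqueness_limite (fun x => f x b) a); [apply h10|apply d1]; exact Dab. }
  assert (e2 : forall a b, D a b -> f01 a b = g2 a b).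
  { intros a b Dab. apply (uniqueness_limite (fun y => f a y) b); [apply h01|apply d2]; exact Dab. }
  assert (sch : forall a b, D a b -> g21 a b = g12 a b).
  { intros a b Dab. destruct (o a b Dab) as [e [he HE]].
    assert (loc1 : forall u v, Rabs (u - a) < e/2 -> Rabs (v - b) < e/2 ->
       derivable_pt_lim (fun z => Derive (fun t => f z t) v) u (g21 u v) /\
       Derive (fun z => Derive (fun t => f z t) v) u = g21 u v).
    { intros u v hu hv. apply (Dloc (fun z => g2 z v) _ u _ (e/2)). lra.
      - intros z hz. symmetry. apply is_derive_unique, is_derive_Reals. apply d2. apply HE.
        apply (near_half a u e hu z hz). lra.
      - apply d21. apply HE; lra. }
    assert (loc2 : forall u v, Rabs (u - a) < e/2 -> Rabs (v - b) < e/2 ->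
       derivable_pt_lim (fun z => Derive (fun t => f t z) u) v (g12 u v) /\
       Derive (fun z => Derive (fun t => f t z) u) v = g12 u v).
    { intros u v hu hv. apply (Dloc (fun z => g1 u z) _ v _ (e/2)). lra.
      - intros z hz. symmetry. apply is_derive_unique, is_derive_Reals. apply d1. apply HE. lra.
        apply (near_half b v e hv z hz).
      - apply d12. apply HE; lra. }
    assert (S := Schwarz f a b).
    rewrite (proj2 (loc1 a b ltac:(rewrite Rminus_diag, Rabs_R0; lra) ltac:(rewrite Rminus_diag, Rabs_R0; lra))) in S.
    rewrite (proj2 (loc2 a b ltac:(rewrite Rminus_diag, Rabs_R0; lra) ltac:(rewrite Rminus_diag, Rabs_R0; lra))) in S.
    apply S.
    - assert (he2 : 0 < e/2) by lra. exists (mkposreal _ he2). simpl. intros u v hu hv.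
      split; [|split; [|split]].
      + exists (g1 u v). apply is_derive_Reals. apply d1. apply HE; lra.
      + exists (g2 u v). apply is_derive_Reals. apply d2. apply HE; lra.
      + exists (g21 u v). apply is_derive_Reals. apply (loc1 u v hu hv).
      + exists (g12 u v). apply is_derive_Reals. apply (loc2 u v hu hv).
    - apply (c2d_ext _ g21 a b (e/2)). lra. intros u v hu hv. apply (loc1 u v hu hv).
      intros eps hep. apply (cg21 a b Dab eps hep).
    - apply (c2d_ext _ g12 a b (e/2)). lra. intros u v hu hv. apply (loc2 u v hu hv).
      intros eps hep. apply (cg12 a b Dab eps hep). }
  split; [exact cf|]. split; [apply (cont_ext_open D f10 g1); assumption|].
  split; [apply (cont_ext_open D f01 g2); assumption|].
  exists g12. split; [exact cg12|]. split.
  - intros a b Dab. destruct (o a b Dab) as [e [he HE]].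
    apply (Dloc (fun y => g1 a y) _ b _ e he).
    + intros t ht. symmetry. apply e1. apply HE; [rewrite Rminus_diag, Rabs_R0; lra| exact ht].
    + apply d12; exact Dab.
  - intros a b Dab. destruct (o a b Dab) as [e [he HE]].
    rewrite <- (sch a b Dab).
    apply (Dloc (fun x => g2 x b) _ a _ e he).
    + intros t ht. symmetry. apply e2. apply HE; [exact ht|rewrite Rminus_diag, Rabs_R0; lra].
    + apply d21; exact Dab.
Qed.


Lemma c2d_of D f a b : cont_on D f -> D a b -> continuity_2d_pt f a b.
Proof. intros cf Dab eps. destruct (cf a b Dab eps (cond_pos eps)) as [d [hd H]].
  exists (mkposreal d hd). exact H. Qed.
Lemma cont_of D f : (forall a b, D a b -> continuity_2d_pt f a b) -> cont_on D f.
Proof. intros H a b Dab eps he. destruct (H a b Dab (mkposreal eps he)) as [d Hd].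
  exists d. split; [apply cond_pos| exact Hd]. Qed.
Lemma cont_plus D f g : cont_on D f -> cont_on D g -> cont_on D (fun x y => f x y + g x y).
Proof. intros h1 h2. apply cont_of. intros a b Dab. apply continuity_2d_pt_plus; eapply c2d_of; eauto. Qed.
Lemma cont_mult D f g : cont_on D f -> cont_on D g -> cont_on D (fun x y => f x y * g x y).
Proof. intros h1 h2. apply cont_of. intros a b Dab. apply continuity_2d_pt_mult; eapply c2d_of; eauto. Qed.
Lemma cont_opp D f : cont_on D f -> cont_on D (fun x y => - f x y).
Proof. intros h1. apply cont_of. intros a b Dab. apply continuity_2d_pt_opp; eapply c2d_of; eauto. Qed.

Ltac rwD := repeat match goal with |- context [Derive ?f ?x] =>
   match goal with H : is_derive _ x _ |- _ => rewrite (is_derive_unique f x _ H) end end.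
Ltac dsolve := auto_derive; [repeat split; try (eexists; eassumption) | rwD ].

Theorem theorem5p1
  (D : R -> R -> Prop) (mu theta : R)
  (v1 v2 w1 w2 : R -> R -> R)
  (v1_10 v1_01 v2_10 v2_01 w1_10 w1_01 w2_10 w2_01 : R -> R -> R)
  (hD : simply_connected_domain D)
  (hmt : mu <> theta)
  (sv1 : smooth_on D v1) (sv2 : smooth_on D v2)
  (sw1 : smooth_on D w1) (sw2 : smooth_on D w2)
  (dv1a : is_d10_on D v1 v1_10) (dv1b : is_d01_on D v1 v1_01)
  (dv2a : is_d10_on D v2 v2_10) (dv2b : is_d01_on D v2 v2_01)
  (dw1a : is_d10_on D w1 w1_10) (dw1b : is_d01_on D w1 w1_01)
  (dw2a : is_d10_on D w2 w2_10) (dw2b : is_d01_on D w2 w2_01)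
  (sys1 : forall a1 a2, D a1 a2 ->
     w1_10 a1 a2 * v2_01 a1 a2 - w1_01 a1 a2 * v2_10 a1 a2
     - w2_10 a1 a2 * v1_01 a1 a2 + w2_01 a1 a2 * v1_10 a1 a2 = 0)
  (sys2 : forall a1 a2, D a1 a2 ->
     w2_10 a1 a2 * v2_01 a1 a2 - w2_01 a1 a2 * v2_10 a1 a2
     + w1_10 a1 a2 * v1_01 a1 a2 - w1_01 a1 a2 * v1_10 a1 a2 = 0)
  (hdet : forall a1 a2, D a1 a2 ->
     (v1_10 a1 a2 * v2_01 a1 a2 - v1_01 a1 a2 * v2_10 a1 a2)
     + (w1_10 a1 a2 * w2_01 a1 a2 - w1_01 a1 a2 * w2_10 a1 a2) <> 0) :
  (* det(d phi^t) = det(dv) + det(dw) *)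
  (forall t a1 a2, D a1 a2 ->
     exists a b c d,
       has_d10_at (phi1 mu theta v1 v2 w1 w2 t) a1 a2 a /\
       has_d01_at (phi1 mu theta v1 v2 w1 w2 t) a1 a2 b /\
       has_d10_at (phi2 mu theta v1 v2 w1 w2 t) a1 a2 c /\
       has_d01_at (phi2 mu theta v1 v2 w1 w2 t) a1 a2 d /\
       a * d - b * c =
       (v1_10 a1 a2 * v2_01 a1 a2 - v1_01 a1 a2 * v2_10 a1 a2)
       + (w1_10 a1 a2 * w2_01 a1 a2 - w1_01 a1 a2 * w2_10 a1 a2)) /\
  (* (d phi^t)^T phi'' + grad_alpha p = 0 *)
  (exists p : R -> R -> R -> R,
     forall t a1 a2, D a1 a2 ->
     exists a b c d acc1 acc2,
       has_d10_at (phi1 mu theta v1 v2 w1 w2 t) a1 a2 a /\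
       has_d01_at (phi1 mu theta v1 v2 w1 w2 t) a1 a2 b /\
       has_d10_at (phi2 mu theta v1 v2 w1 w2 t) a1 a2 c /\
       has_d01_at (phi2 mu theta v1 v2 w1 w2 t) a1 a2 d /\
       has_second_deriv (fun s => phi1 mu theta v1 v2 w1 w2 s a1 a2) t acc1 /\
       has_second_deriv (fun s => phi2 mu theta v1 v2 w1 w2 s a1 a2) t acc2 /\
       has_d10_at (p t) a1 a2 (- (a * acc1 + c * acc2)) /\
       has_d01_at (p t) a1 a2 (- (b * acc1 + d * acc2))).
Proof.
  assert (o : open2 D) by (destruct hD as [[o _] _]; exact o).
  destruct (smooth_info D v1 v1_10 v1_01 o (sv1 3%nat) dv1a dv1b) as [cv1 [cv1a [cv1b [mv1 [cm1 [dm1a dm1b]]]]]].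
  destruct (smooth_info D v2 v2_10 v2_01 o (sv2 3%nat) dv2a dv2b) as [cv2 [cv2a [cv2b [mv2 [cm2 [dm2a dm2b]]]]]].
  destruct (smooth_info D w1 w1_10 w1_01 o (sw1 3%nat) dw1a dw1b) as [cw1 [cw1a [cw1b _]]].
  destruct (smooth_info D w2 w2_10 w2_01 o (sw2 3%nat) dw2a dw2b) as [cw2 [cw2a [cw2b _]]].
  assert (Dx : forall f fx, is_d10_on D f fx -> forall a b, D a b -> is_derive (fun u => f u b) a (fx a b)).
  { intros f fx h a b Dab. apply is_derive_Reals. apply h. exact Dab. }
  assert (Dy : forall f fy, is_d01_on D f fy -> forall a b, D a b -> is_derive (fun u => f a u) b (fy a b)).
  { intros f fy h a b Dab. apply is_derive_Reals. apply h. exact Dab. }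
  destruct (existsF D
    (fun x y => w1 x y * v1_10 x y + w2 x y * v2_10 x y)
    (fun x y => w1 x y * v1_01 x y + w2 x y * v2_01 x y)
    (fun x y => w1_01 x y * v1_10 x y + w1 x y * mv1 x y + (w2_01 x y * v2_10 x y + w2 x y * mv2 x y))
    (fun x y => w1_10 x y * v1_01 x y + w1 x y * mv1 x y + (w2_10 x y * v2_01 x y + w2 x y * mv2 x y))
    hD) as [F1 [dF1a dF1b]].
  { apply cont_plus; apply cont_mult; assumption. }
  { apply cont_plus; apply cont_mult; assumption. }
  { apply cont_plus; apply cont_plus; apply cont_mult; assumption. }
  { apply cont_plus; apply cont_plus; apply cont_mult; assumption. }
  { intros a b Dab. apply is_derive_Reals.
    assert (h1 := Dy _ _ dw1b a b Dab). assert (h2 := Dy _ _ dw2b a b Dab).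
    assert (h3 := Dy _ _ dm1a a b Dab). assert (h4 := Dy _ _ dm2a a b Dab).
    dsolve. ring. }
  { intros a b Dab. apply is_derive_Reals.
    assert (h1 := Dx _ _ dw1a a b Dab). assert (h2 := Dx _ _ dw2a a b Dab).
    assert (h3 := Dx _ _ dm1b a b Dab). assert (h4 := Dx _ _ dm2b a b Dab).
    dsolve. ring. }
  { intros a b Dab. assert (s := sys2 a b Dab). lra. }
  destruct (existsF D
    (fun x y => - (w2 x y * v1_10 x y) + w1 x y * v2_10 x y)
    (fun x y => - (w2 x y * v1_01 x y) + w1 x y * v2_01 x y)
    (fun x y => - (w2_01 x y * v1_10 x y + w2 x y * mv1 x y) + (w1_01 x y * v2_10 x y + w1 x y * mv2 x y))
    (fun x y => - (w2_10 x y * v1_01 x y + w2 x y * mv1 x y) + (w1_10 x y * v2_01 x y + w1 x y * mv2 x y))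
    hD) as [F2 [dF2a dF2b]].
  { apply cont_plus; [apply cont_opp|]; apply cont_mult; assumption. }
  { apply cont_plus; [apply cont_opp|]; apply cont_mult; assumption. }
  { apply cont_plus; [apply cont_opp|]; apply cont_plus; apply cont_mult; assumption. }
  { apply cont_plus; [apply cont_opp|]; apply cont_plus; apply cont_mult; assumption. }
  { intros a b Dab. apply is_derive_Reals.
    assert (h1 := Dy _ _ dw1b a b Dab). assert (h2 := Dy _ _ dw2b a b Dab).
    assert (h3 := Dy _ _ dm1a a b Dab). assert (h4 := Dy _ _ dm2a a b Dab).
    dsolve. ring. }
  { intros a b Dab. apply is_derive_Reals.
    assert (h1 := Dx _ _ dw1a a b Dab). assert (h2 := Dx _ _ dw2a a b Dab).
    assert (h3 := Dx _ _ dm1b a b Dab). assert (h4 := Dx _ _ dm2b a b Dab).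
    dsolve. ring. }
  { intros a b Dab. assert (s := sys1 a b Dab). lra. }
  split.
  - intros t a1 a2 Dz.
    assert (x1 := Dx _ _ dv1a a1 a2 Dz). assert (x2 := Dx _ _ dv2a a1 a2 Dz).
    assert (x3 := Dx _ _ dw1a a1 a2 Dz). assert (x4 := Dx _ _ dw2a a1 a2 Dz).
    assert (y1 := Dy _ _ dv1b a1 a2 Dz). assert (y2 := Dy _ _ dv2b a1 a2 Dz).
    assert (y3 := Dy _ _ dw1b a1 a2 Dz). assert (y4 := Dy _ _ dw2b a1 a2 Dz).
    set (C1 := cos (mu*t)). set (S1 := sin (mu*t)). set (C2 := cos (theta*t)). set (S2 := sin (theta*t)).
    exists (C1 * v1_10 a1 a2 - S1 * v2_10 a1 a2 + (C2 * w1_10 a1 a2 - S2 * w2_10 a1 a2)).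
    exists (C1 * v1_01 a1 a2 - S1 * v2_01 a1 a2 + (C2 * w1_01 a1 a2 - S2 * w2_01 a1 a2)).
    exists (S1 * v1_10 a1 a2 + C1 * v2_10 a1 a2 + (S2 * w1_10 a1 a2 + C2 * w2_10 a1 a2)).
    exists (S1 * v1_01 a1 a2 + C1 * v2_01 a1 a2 + (S2 * w1_01 a1 a2 + C2 * w2_01 a1 a2)).
    split; [unfold has_d10_at, phi1; apply is_derive_Reals; dsolve; fold C1 S1 C2 S2; ring|].
    split; [unfold has_d01_at, phi1; apply is_derive_Reals; dsolve; fold C1 S1 C2 S2; ring|].
    split; [unfold has_d10_at, phi2; apply is_derive_Reals; dsolve; fold C1 S1 C2 S2; ring|].
    split; [unfold has_d01_at, phi2; apply is_derive_Reals; dsolve; fold C1 S1 C2 S2; ring|].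
    assert (e1 : C1^2 + S1^2 = 1) by (unfold C1, S1; rewrite <- (sin2_cos2 (mu*t)); unfold Rsqr; ring).
    assert (e2 : C2^2 + S2^2 = 1) by (unfold C2, S2; rewrite <- (sin2_cos2 (theta*t)); unfold Rsqr; ring).
    assert (s1 := sys1 a1 a2 Dz). assert (s2 := sys2 a1 a2 Dz).
    set (dv := v1_10 a1 a2 * v2_01 a1 a2 - v1_01 a1 a2 * v2_10 a1 a2).
    set (dw := w1_10 a1 a2 * w2_01 a1 a2 - w1_01 a1 a2 * w2_10 a1 a2).
    set (al := C1*C2 + S1*S2). set (be := C1*S2 - S1*C2).
    match goal with |- ?L = _ => replace L with ((C1^2+S1^2)*dv + (C2^2+S2^2)*dw
       + al * (w1_10 a1 a2 * v2_01 a1 a2 - w1_01 a1 a2 * v2_10 a1 a2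
     - w2_10 a1 a2 * v1_01 a1 a2 + w2_01 a1 a2 * v1_10 a1 a2)
       - be * (w2_10 a1 a2 * v2_01 a1 a2 - w2_01 a1 a2 * v2_10 a1 a2
     + w1_10 a1 a2 * v1_01 a1 a2 - w1_01 a1 a2 * v1_10 a1 a2)) by (unfold dv, dw, al, be; ring) end.
    rewrite e1, e2, s1, s2. ring.
  - exists (fun t x y =>
      mu^2*(cos (mu*t)^2+sin (mu*t)^2)*(v1 x y^2 + v2 x y^2)/2
      + theta^2*(cos (theta*t)^2+sin (theta*t)^2)*(w1 x y^2 + w2 x y^2)/2
      + mu^2*((cos (mu*t)*cos (theta*t) + sin (mu*t)*sin (theta*t))*(v1 x y*w1 x y + v2 x y * w2 x y)
              + (cos (mu*t)*sin (theta*t) - sin (mu*t)*cos (theta*t))*(- (v1 x y * w2 x y) + v2 x y * w1 x y))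
      + (theta^2 - mu^2)*((cos (mu*t)*cos (theta*t) + sin (mu*t)*sin (theta*t))*F1 x y
              + (cos (mu*t)*sin (theta*t) - sin (mu*t)*cos (theta*t))*F2 x y)).
    intros t a1 a2 Dz.
    assert (x1 := Dx _ _ dv1a a1 a2 Dz). assert (x2 := Dx _ _ dv2a a1 a2 Dz).
    assert (x3 := Dx _ _ dw1a a1 a2 Dz). assert (x4 := Dx _ _ dw2a a1 a2 Dz).
    assert (y1 := Dy _ _ dv1b a1 a2 Dz). assert (y2 := Dy _ _ dv2b a1 a2 Dz).
    assert (y3 := Dy _ _ dw1b a1 a2 Dz). assert (y4 := Dy _ _ dw2b a1 a2 Dz).
    assert (f1 := Dx _ _ dF1a a1 a2 Dz). assert (f2 := Dy _ _ dF1b a1 a2 Dz).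
    assert (f3 := Dx _ _ dF2a a1 a2 Dz). assert (f4 := Dy _ _ dF2b a1 a2 Dz).
    set (C1 := cos (mu*t)). set (S1 := sin (mu*t)). set (C2 := cos (theta*t)). set (S2 := sin (theta*t)).
    set (V1 := v1 a1 a2). set (V2 := v2 a1 a2). set (W1 := w1 a1 a2). set (W2 := w2 a1 a2).
    exists (C1 * v1_10 a1 a2 - S1 * v2_10 a1 a2 + (C2 * w1_10 a1 a2 - S2 * w2_10 a1 a2)).
    exists (C1 * v1_01 a1 a2 - S1 * v2_01 a1 a2 + (C2 * w1_01 a1 a2 - S2 * w2_01 a1 a2)).
    exists (S1 * v1_10 a1 a2 + C1 * v2_10 a1 a2 + (S2 * w1_10 a1 a2 + C2 * w2_10 a1 a2)).
    exists (S1 * v1_01 a1 a2 + C1 * v2_01 a1 a2 + (S2 * w1_01 a1 a2 + C2 * w2_01 a1 a2)).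
    exists (-(mu^2*(C1*V1 - S1*V2)) - theta^2*(C2*W1 - S2*W2)).
    exists (-(mu^2*(S1*V1 + C1*V2)) - theta^2*(S2*W1 + C2*W2)).
    split; [unfold has_d10_at, phi1; apply is_derive_Reals; dsolve; fold C1 S1 C2 S2; ring|].
    split; [unfold has_d01_at, phi1; apply is_derive_Reals; dsolve; fold C1 S1 C2 S2; ring|].
    split; [unfold has_d10_at, phi2; apply is_derive_Reals; dsolve; fold C1 S1 C2 S2; ring|].
    split; [unfold has_d01_at, phi2; apply is_derive_Reals; dsolve; fold C1 S1 C2 S2; ring|].
    split.
    { exists (fun s => -mu*sin(mu*s)*V1 - mu*cos(mu*s)*V2 + (-theta*sin(theta*s)*W1 - theta*cos(theta*s)*W2)).
      split.
      - intros s. unfold phi1. apply is_derive_Reals. fold V1 V2 W1 W2. auto_derive. auto. ring.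
      - apply is_derive_Reals. auto_derive. auto. fold C1 S1 C2 S2. ring. }
    split.
    { exists (fun s => mu*cos(mu*s)*V1 - mu*sin(mu*s)*V2 + (theta*cos(theta*s)*W1 - theta*sin(theta*s)*W2)).
      split.
      - intros s. unfold phi2. apply is_derive_Reals. fold V1 V2 W1 W2. auto_derive. auto. ring.
      - apply is_derive_Reals. auto_derive. auto. fold C1 S1 C2 S2. ring. }
    split.
    + unfold has_d10_at. apply is_derive_Reals. dsolve. fold C1 S1 C2 S2 V1 V2 W1 W2. field.
    + unfold has_d01_at. apply is_derive_Reals. dsolve. fold C1 S1 C2 S2 V1 V2 W1 W2. field.
Qed.
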